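(* Let $N\ge 2$, let $s_1(0),\dots,s_N(0)\in\mathbb R$, and let $s^*$ lie in the convex hull of $\{s_1(0),\dots,s_N(0)\}$. Then there exist weights $a_{ij}\ge 0$ ($1\le i\ne j\le N$) such that the solution of $s_i'=\sum_{j\ne i}a_{ij}(s_j-s_i)$, $i=1,\dots,N$, with these initial opinions satisfies $\lim_{t\to\infty}\mathbf s(t)=s^*(1,\dots,1)^T$. *)

(* Defs.v *)
From HB Require Import structures.
From mathcomp Require Import all_boot all_order all_algebra.
From mathcomp Require Import all_classical all_reals all_analysis.
Set Implicit Arguments. Unset Strict Implicit. Unset Printing Implicit Defensive.
Import Order.TTheory GRing.Theory Num.Theory.
Import numFieldNormedType.Exports.
Local Open Scope ring_scope.
Local Open Scope classical_set_scope.

Definition in_convex_hull (R : realType) (N : nat) (s0 : 'I_N -> R) (x : R) : Prop :=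
  exists lam : 'I_N -> R, (forall i, 0 <= lam i) /\ \sum_(i < N) lam i = 1 /\
    x = \sum_(i < N) lam i * s0 i.

Definition is_consensus_solution (R : realType) (N : nat)
  (a : 'I_N -> 'I_N -> R) (s0 : 'I_N -> R) (s : R -> 'I_N -> R) : Prop :=
  s 0 = s0 /\
  forall (t : R), 0 <= t -> forall i : 'I_N,
    is_derive t 1 (fun u => s u i) (\sum_(j < N | j != i) a i j * (s t j - s t i)).

(* Main.v *)
Require Import Defs.
From HB Require Import structures.
From mathcomp Require Import all_boot all_order all_algebra.
From mathcomp Require Import all_classical all_reals all_analysis.
Import Order.TTheory GRing.Theory Num.Theory.
Import numFieldNormedType.Exports.
Local Open Scope ring_scope.
Local Open Scope classical_set_scope.

Lemma cst_from0 (R : realType) (f : R -> R) :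
  (forall t : R, 0 <= t -> is_derive t 1 f 0) -> forall t : R, 0 <= t -> f t = f 0.
Proof.
move=> df t; rewrite le0r => /orP[/eqP -> //|t0].
have [||c _] := @MVT R f (fun=> 0) 0 t t0.
- move=> x; rewrite in_itv /= => /andP[x0 _]; exact: df (ltW x0).
- apply: derivable_within_continuous => x; rewrite in_itv /= => /andP[x0 _].
  by have := df x x0 => -[].
by move=> /eqP; rewrite mul0r subr_eq0 => /eqP.
Qed.

Lemma sum_neq (R : realType) (N : nat) (i : 'I_N) (F : 'I_N -> R) :
  F i = 0 -> \sum_(j < N | j != i) F j = \sum_(j < N) F j.
Proof. by move=> Fi; rewrite [RHS](bigD1 i) //= Fi add0r. Qed.

Lemma sum_lam (R : realType) (N : nat) (lam x : 'I_N -> R) (y : R) :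
  \sum_(i < N) lam i = 1 ->
  \sum_(j < N) lam j * (x j - y) = \sum_(j < N) lam j * x j - y.
Proof.
move=> l1.
under eq_bigr do rewrite mulrBr.
by rewrite sumrB -mulr_suml l1 mul1r.
Qed.

Lemma is_derive_expRV (R : realType) (t : R) :
  is_derive t 1 (fun u : R => (expR u)^-1) (- (expR t)^-1).
Proof.
have e0 : expR t != 0 by rewrite expR_eq0.
apply: DeriveDef; first exact: derivableV.
rewrite deriveV // derive_val.
by rewrite /= scaleNr expr2 invfM [_ *: _]mulrC mulrA mulrV ?mul1r // unitfE.
Qed.

Lemma is_derive_sol (R : realType) (a c t : R) :
  is_derive t 1 (fun u : R => a + c * (expR u)^-1) (- (c * (expR t)^-1)).
Proof.
have h := @is_derive_expRV R t.
have h2 : is_derive t 1 (c \*: (fun u : R => (expR u)^-1)) (c *: - (expR t)^-1) by exact: is_deriveZ.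
have h3 := is_deriveD (is_derive_cst a t 1) h2.
apply: is_derive_eq h3 _ => //.
by rewrite add0r [_ *: _]mulrN.
Qed.

Theorem mainTheorem9 (R : realType) (N : nat) (s0 : 'I_N -> R) (sstar : R) :
  (2 <= N)%N -> in_convex_hull s0 sstar ->
  exists a : 'I_N -> 'I_N -> R,
    (forall i j : 'I_N, i != j -> 0 <= a i j) /\
    (exists s : R -> 'I_N -> R, is_consensus_solution a s0 s) /\
    (forall s : R -> 'I_N -> R, is_consensus_solution a s0 s ->
       forall i : 'I_N, (fun t => s t i) @ +oo --> sstar).
Proof.
move=> _ [lam [lam0 [lam1 hs]]].
have key : forall (x : 'I_N -> R) i,
    \sum_(j < N | j != i) lam j * (x j - x i) = \sum_(j < N) lam j * x j - x i.
  by move=> x i; rewrite sum_neq ?subrr ?mulr0 // sum_lam.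
exists (fun _ j => lam j); split; first by [].
split.
  exists (fun t i => sstar + (s0 i - sstar) * (expR t)^-1); split.
    by apply/funext => i; rewrite expR0 invr1 mulr1 addrC subrK.
  move=> t _ i; rewrite key.
  apply: is_derive_eq; first exact: is_derive_sol.
  under eq_bigr do rewrite mulrDr mulrA.
  rewrite big_split /= -!mulr_suml lam1 mul1r sum_lam // -hs subrr mul0r addr0.
  by rewrite opprD addrA subrr add0r.
move=> s [s00 ds] i.
have ds' : forall t : R, 0 <= t -> forall j,
    is_derive t 1 (s^~ j) (\sum_(k < N) lam k * s t k - s t j).
  by move=> t t0 j; rewrite -key; exact: ds.
have hm : forall t : R, 0 <= t -> \sum_(j < N) lam j * s t j = sstar.
  move=> t t0; rewrite hs -s00.
  apply: (@cst_from0 R (fun u => \sum_(j < N) lam j * s u j)) => // u u0.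
  have h := @is_derive_sum R R R N (fun j u => lam j * s u j) u 1
     (fun j => lam j * (\sum_(k < N) lam k * s u k - s u j))
     (fun j => is_deriveZ (lam j) (ds' u u0 j)).
  have -> : (fun u => \sum_(j < N) lam j * s u j) = \sum_(j < N) (fun u => lam j * s u j).
    by apply/funext => v; rewrite fct_sumE.
  apply: is_derive_eq h _.
  under eq_bigr do rewrite mulrBr.
  by rewrite sumrB -mulr_suml lam1 mul1r subrr.
have hi : forall t : R, 0 <= t -> s t i = sstar + (s0 i - sstar) * (expR t)^-1.
  move=> t t0.
  have E : expR t * (s t i - sstar) = s0 i - sstar.
    rewrite -[RHS]mul1r -(@expR0 R) -s00.
    apply: (@cst_from0 R (fun u => expR u * (s u i - sstar))) => // u u0.
    have hg := is_deriveB (ds' u u0 i) (is_derive_cst sstar u 1).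
    have h := is_deriveM (is_derive_expR u) hg.
    apply: is_derive_eq h _.
    rewrite hm // /= subr0 /GRing.scale /= [expR u * _]mulrC -mulrDl.
    have -> : (s^~ i - cst sstar) u = s u i - sstar by [].
    by rewrite addrA subrK subrr mul0r.
  have ex : expR t \is a GRing.unit by rewrite unitfE expR_eq0.
  by rewrite -E [expR t * _]mulrC mulrK // addrC subrK.
apply: cvg_trans; first apply: (@near_eq_cvg _ _ _ _ (fun t => sstar + (s0 i - sstar) * (expR t)^-1)).
  apply: filterS (@nbhs_pinfty_ge R 0 _) => // x x0 /=; by rewrite hi.
have -> : nbhs sstar = nbhs (sstar + (s0 i - sstar) * 0) by rewrite mulr0 addr0.
apply: cvgD; first exact: cvg_cst.
apply: cvgMl_tmp.
have h := @cvgr_expR R.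
by under eq_fun do rewrite -expRN.
Qed.
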